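(* Let $k\ge 1$ and let $Q_k$ be the hypercube of dimension $k$. For any two vertices $u$ and $v$ of $Q_k$, perfect state transfer from $u$ to $v$ is possible by a single CQC-hopping; that is, there exist a spanning subgraph $H$ of $Q_k$ (with $V(H)=V(Q_k)$ and $E(H)\subseteq E(Q_k)$) and a time $t_0>0$ such that $|\langle v|\exp(-it_0A(H))|u\rangle|=1$.
   Context: The hypercube $Q_k$ is the graph with vertex set $\{0,1\}^k$, two vertices being adjacent if and only if their labels have Hamming distance $1$. For a graph $H$ with adjacency matrix $A(H)$, associate to each vertex $x$ the standard basis vector $|x\rangle\in\mathbb{C}^{|V(H)|}$; $H$ has perfect state transfer from $a$ to $b$ at time $t_0$ if $|\langle b|\exp(-it_0A(H))|a\rangle|=1$. A CQC-hopping from $u$ to $v$ on a graph $G$ consists of switching off a set of edges of $G$ to obtain a spanning subgraph $H$ (same vertex set, subset of the edges), performing perfect state transfer from $u$ to $v$ in $H$, and then switching the removed edges back on. *)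

(* Defs.v *)
From HB Require Import structures.
From mathcomp Require Import all_boot all_order all_algebra.
From mathcomp Require Import all_classical all_reals all_analysis.
From mathcomp.real_closed Require Import complex.
Set Implicit Arguments. Unset Strict Implicit. Unset Printing Implicit Defensive.
Import Order.TTheory GRing.Theory Num.Theory.
Import numFieldNormedType.Exports.
(* Topology/norm on the complex numbers R[i] (the canonical one coming from its
   numeric field norm, as provided generically by MathComp-Analysis for R^o). *)
HB.instance Definition _ (R : rcfType) := NormedModule.copy R[i] (R[i])^o.

Local Open Scope classical_set_scope.
Local Open Scope ring_scope.

Definition qvertex (k : nat) := {ffun 'I_k -> bool}.

Definition hamming (k : nat) (x y : qvertex k) : nat := #|[set i | x i != y i]|.

Definition hypercube_adj (k : nat) : rel (qvertex k) :=
  fun x y => hamming x y == 1%N.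

(* H (given by a symmetric adjacency relation on V(Q_k)) is a spanning subgraph
   of Q_k: same vertex set, edge set contained in that of Q_k. *)
Definition spanning_subgraph (k : nat) (H : rel (qvertex k)) : Prop :=
  symmetric H /\ subrel H (@hypercube_adj k).

(* Adjacency matrix A(H) over C, rows/columns indexed by V(H) via enum_rank. *)
Definition adj_matrix (R : rcfType) (T : finType) (H : rel T) : 'M[R[i]]_#|T| :=
  \matrix_(a, b) (H (enum_val a) (enum_val b))%:R.

Definition is_mexp (R : realType) (n : nat) (M E : 'M[R[i]]_n) : Prop :=
  (fun N => \sum_(m < N) (m`!%:R)^-1 *: M ^+ m) @ \oo --> (E : 'M[R[i]]_n).

(* Basis-vector amplitude <b| E |a> = E_{b,a}. *)
Definition amp (R : rcfType) (T : finType) (E : 'M[R[i]]_#|T|) (a b : T) : R[i] :=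
  E (enum_rank b) (enum_rank a).

(* Main.v *)
Require Import Defs.
From HB Require Import structures.
From mathcomp Require Import all_boot all_order all_algebra.
From mathcomp Require Import all_classical all_reals all_analysis.
From mathcomp.real_closed Require Import complex.
From mathcomp Require Import ring.
Import Order.TTheory GRing.Theory Num.Theory.
Import numFieldNormedType.Exports.
Local Open Scope ring_scope.
Section Scalar.
Variable R : realType.
Local Notation C := (R[i]).

Lemma term (t : R) m : (m`!%:R)^-1 * (-('i%C * t%:C%C))^+m =
  (cos_coeff t m)%:C%C - 'i%C * (sin_coeff t m)%:C%C :> C.
Proof.
rewrite /cos_coeff /sin_coeff /=.
have hz : forall q, (-('i%C * t%:C%C)) ^+ (q.*2) = (-1) ^+ q * (t%:C%C ^+ 2) ^+ q :> C.
  move=> q; rewrite -mul2n exprM sqrrN [('i%C * _) ^+ 2]exprMn sqr_i mulN1r.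
  by rewrite -mulN1r exprMn.
have ht : forall q, (t%:C%C ^+ q.*2) = (t%:C%C ^+ 2) ^+ q :> C.
  by move=> q; rewrite -mul2n exprM.
rewrite -[m]odd_double_half; case: (odd m); move: (m./2) => p /=.
  rewrite add1n /= odd_double /= doubleK !mul0r mul1r rmorph0 sub0r.
  rewrite !(rmorphM, fmorphV, rmorphXn, rmorphN, rmorph1, rmorph_nat).
  rewrite !exprSr hz ht; ring.
rewrite add0n odd_double /= doubleK !mul0r mul1r rmorph0 mulr0 subr0.
rewrite -exprnP.
rewrite !(rmorphM, fmorphV, rmorphXn, rmorphN, rmorph1, rmorph_nat).
rewrite hz ht; ring.
Qed.
End Scalar.
Section Scalar2.
Variable R : realType.
Local Notation C := (R[i]).
Local Open Scope classical_set_scope.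

Definition ps (z : C) (N : nat) := \sum_(m < N) (m`!%:R)^-1 * z ^+ m.
Definition G (t : R) : C := (cos t)%:C%C - 'i%C * (sin t)%:C%C.
Definition sgn (b : bool) : R := if b then -1 else 1.

Lemma ps_split t N : ps (-('i%C * t%:C%C)) N =
  (series (cos_coeff t) N)%:C%C - 'i%C * (series (sin_coeff t) N)%:C%C.
Proof.
rewrite /ps /series /= !big_mkord !rmorph_sum mulr_sumr -sumrB.
by apply: eq_bigr => m _; rewrite term.
Qed.

Lemma normC_real (x : R) : `|x%:C%C| = (`|x|)%:C%C :> C.
Proof.
rewrite {1}/Num.norm /= expr0n addr0 /=; congr (_%:C%C); exact: sqrtr_sqr.
Qed.

Lemma cvgC (f : nat -> R) (l : R) : f n @[n --> \oo] --> l ->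
  (f n)%:C%C @[n --> \oo] --> (l%:C%C : C).
Proof.
move=> h; apply/cvgrPdist_lt => e e0.
have : (0 : C) < e by [].
rewrite ltcE /= => /andP[/eqP Ie Re0].
move/cvgrPdist_lt: h => /(_ _ Re0); apply: filterS => N hN.
rewrite -rmorphB normC_real ltcE /= Ie eqxx /=.
by [].
Qed.

Lemma ps_cvg t : ps (-('i%C * t%:C%C)) N @[N --> \oo] --> G t.
Proof.
under eq_fun do rewrite ps_split.
have hc : series (cos_coeff t) @ \oo --> cos t.
  by rewrite cos.unlock; exact: is_cvg_series_cos_coeff.
have hs : series (sin_coeff t) @ \oo --> sin t.
  by rewrite sin.unlock; exact: is_cvg_series_sin_coeff.
have h1 := cvgC _ _ hc; have h2 := cvgC _ _ hs.
have h3 : 'i%C * (series (sin_coeff t) N)%:C%C @[N --> \oo] --> ('i%C * (sin t)%:C%C : C).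
  exact: cvgMl_tmp.
exact: (cvgB h1 h3).
Qed.

End Scalar2.
Arguments G {R}.
Arguments ps {R}.
Arguments sgn {R}.
Section Gsec.
Variable R : realType.
Local Notation C := (R[i]).
Local Open Scope classical_set_scope.

Lemma G_add (a b : R) : G (a + b) = G a * G b.
Proof.
rewrite /G cosD sinD !(rmorphB, rmorphD, rmorphM).
have e : forall x y z w : C, (x - 'i%C * y) * (z - 'i%C * w) =
  x * z - y * w - 'i%C * (y * z + x * w) + ('i%C ^+ 2 + 1) * (y * w).
  by move=> *; ring.
rewrite e sqr_i addNr mul0r addr0; ring.
Qed.

Lemma G0 : G (0 : R) = 1.
Proof. by rewrite /G cos0 sin0 rmorph0 rmorph1 mulr0 subr0. Qed.

Lemma G_pih (b : bool) : G (pi / 2 * sgn b) = if b then 'i%C else - 'i%C :> C.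
Proof.
rewrite /sgn; case: b; rewrite ?mulrN1 ?mulr1 /G ?cosN ?sinN cos_pihalf sin_pihalf
  ?rmorphN rmorph0 rmorph1.
all: ring.
Qed.

Lemma norm_i : `|'i%C| = 1 :> C.
Proof. by rewrite {1}/Num.norm /= expr0n expr1n add0r sqrtr1. Qed.

Lemma cvg_bigsum (I : finType) (f : I -> nat -> C) (l : I -> C) :
  (forall i, f i N @[N --> \oo] --> l i) ->
  \sum_i f i N @[N --> \oo] --> \sum_i l i.
Proof.
move=> h; elim: (index_enum I) => [|x r IH].
  rewrite big_nil; under eq_fun do rewrite big_nil; exact: cvg_cst.
rewrite big_cons; under eq_fun do rewrite big_cons; exact: cvgD (h x) IH.
Qed.

Lemma cvg_mx_entries n (f : nat -> 'M[C]_n) (L : 'M[C]_n) :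
  (forall a b, f N a b @[N --> \oo] --> L a b) -> f N @[N --> \oo] --> L.
Proof.
move=> h; apply/cvg_mx_entourageP => E entE.
apply: filter_forall => a; apply: filter_forall => b.
move/cvg_app_entourageP: (h a b) => /(_ E entE).
apply: filterS => N.
by move=> hE /=; rewrite in_setE.
Qed.
End Gsec.
Section Hyper.
Variable R : realType.
Variable k : nat.
Variables u v : qvertex k.
Local Notation C := (R[i]).

Definition D (j : 'I_k) := u j != v j.
Definition flip (j : 'I_k) (x : qvertex k) : qvertex k :=
  [ffun i => if i == j then ~~ x i else x i].
Definition Hr : rel (qvertex k) := fun x y => [exists j, D j && (y == flip j x)].
Definition chi (S x : qvertex k) : C := \prod_j (if x j && S j then -1 else 1).
Definition lam (S : qvertex k) : R := \sum_(j | D j) sgn (S j).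
Definition w : C := ((2 ^ k)%:R)^-1.

Lemma flipK j : involutive (flip j).
Proof. by move=> x; apply/ffunP => i; rewrite !ffunE; case: eqP => // _; rewrite negbK. Qed.

Lemma flip_inj x j j' : flip j x = flip j' x -> j = j'.
Proof.
move/(congr1 (fun f : qvertex k => f j)); rewrite !ffunE eqxx.
by case: eqP => // _; case: (x j).
Qed.

Lemma Hr_sym : symmetric Hr.
Proof.
move=> x y; apply/existsP/existsP => -[j /andP[Dj /eqP e]]; exists j;
  by rewrite Dj /= e flipK.
Qed.

Lemma Hr_sub : subrel Hr (@hypercube_adj k).
Proof.
move=> x y /existsP[j /andP[_ /eqP ->]]; rewrite /hypercube_adj /hamming /=.
rewrite (@eq_card _ _ (pred1 j)) ?card1 // => i.
rewrite /= /in_mem /= /in_set asboolb ffunE.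
by case: (i == j); case: (x i).
Qed.

Lemma Hr_nat x z : ((Hr x z)%:R : C) = \sum_(j | D j) ((z == flip j x)%:R : C).
Proof.
case: (boolP (Hr x z)) => [/existsP[j0 /andP[Dj0 /eqP ->]]|nH].
  rewrite (bigD1 j0) //= eqxx big1 ?addr0 // => j /andP[_ ne].
  case: eqP => // /esym /flip_inj e; by rewrite e eqxx in ne.
rewrite big1 // => j Dj; case: eqP => // e; case/negP: nH.
by apply/existsP; exists j; rewrite Dj e eqxx.
Qed.

Lemma chi_flip S j x : chi S (flip j x) = (sgn (S j))%:C%C * chi S x.
Proof.
rewrite /chi (bigD1 j) //= [in RHS](bigD1 j) //= mulrA; congr (_ * _).
  rewrite ffunE eqxx /sgn; case: (x j); case: (S j) => /=;
  by rewrite ?rmorphN ?rmorph1 ?mulN1r ?mul1r ?opprK.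
by apply: eq_bigr => i ne; rewrite ffunE (negbTE ne).
Qed.

Lemma lamC S : (lam S)%:C%C = \sum_(j | D j) (sgn (S j))%:C%C.
Proof. by rewrite /lam rmorph_sum. Qed.

Lemma eigen S x : \sum_z (Hr x z)%:R * chi S z = (lam S)%:C%C * chi S x.
Proof.
under eq_bigr => z _ do rewrite Hr_nat mulr_suml.
rewrite exchange_big /= lamC mulr_suml; apply: eq_bigr => j Dj.
rewrite (bigD1 (flip j x)) //= eqxx mul1r big1 ?addr0 ?chi_flip //.
by move=> z /negbTE ->; rewrite mul0r.
Qed.

Lemma orth x y : \sum_S chi S x * chi S y = if x == y then (2 ^ k)%:R else 0.
Proof.
rewrite /chi.
under eq_bigr => S _ do rewrite -big_split /=.
rewrite -(bigA_distr_bigA (fun (j : 'I_k) (b : bool) =>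
   ((if x j && b then -1 else 1) * (if y j && b then -1 else 1) : C))) /=.
under eq_bigr => j _ do rewrite big_bool /= !andbF !andbT !mulr1.
case: eqP => [->|/eqP ne].
  rewrite (eq_bigr (fun _ => 2%:R)); last by move=> j _; case: (y j);
    rewrite ?mulrNN ?mulr1.
  by rewrite prodr_const card_ord natrX.
have [j hj] : exists j, x j != y j.
  apply/existsP; apply: contraR ne; rewrite negb_exists => /forallP h.
  by apply/eqP/ffunP => j; apply/eqP; move: (h j); rewrite negbK.
rewrite (bigD1 j) //=; move: hj; case: (x j); case: (y j) => //= _;
  by rewrite ?mulr1 ?mul1r addNr mul0r.
Qed.


Lemma reidx (F : qvertex k -> C) :
  \sum_(c < #|qvertex k|) F (enum_val c) = \sum_z F z.
Proof. by rewrite -big_enum_val; apply: eq_bigl. Qed.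

Definition A := adj_matrix R Hr.

Lemma w2 : w * (2 ^ k)%:R = 1.
Proof. by rewrite /w mulVf // pnatr_eq0 expn_eq0. Qed.

Lemma powA m a b : (A ^+ m) a b =
  w * \sum_S chi S (enum_val a) * chi S (enum_val b) * (lam S)%:C%C ^+ m.
Proof.
elim: m a b => [|m IH] a b.
  rewrite expr0 mxE.
  under eq_bigr => S _ do rewrite expr0 mulr1.
  rewrite orth (inj_eq enum_val_inj); case: (a == b); by rewrite ?mulr0 ?w2.
rewrite exprS mxE.
under eq_bigr => c _ do rewrite IH mulrCA mulr_sumr.
rewrite -mulr_sumr exchange_big /=; congr (_ * _); apply: eq_bigr => S _.
under eq_bigr => c _ do rewrite mxE mulrA.
under eq_bigr => c _ do rewrite mulrA.
rewrite -!mulr_suml (reidx (fun z => (Hr (enum_val a) z)%:R * chi S z)) eigen.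
by rewrite exprS; ring.
Qed.

Local Open Scope classical_set_scope.

Definition t0 : R := pi / 2.
Definition Mt : 'M[C]_#|qvertex k| := (- ('i%C * t0%:C%C)) *: A.
Definition Ent : 'M[C]_#|qvertex k| := \matrix_(a, b)
  (w * \sum_S chi S (enum_val a) * chi S (enum_val b) * G (t0 * lam S)).

Lemma powZ (c : C) (B : 'M[C]_#|qvertex k|) m a b :
  ((c *: B) ^+ m) a b = c ^+ m * (B ^+ m) a b.
Proof.
elim: m a b => [|m IH] a b; first by rewrite !expr0 mul1r.
rewrite !exprS !mxE mulr_sumr; apply: eq_bigr => j _.
rewrite IH mxE; ring.
Qed.

Lemma partial_entry N a b :
  (\sum_(m < N) (m`!%:R)^-1 *: Mt ^+ m) a b =
  w * \sum_S chi S (enum_val a) * chi S (enum_val b) *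
      ps (- ('i%C * (t0 * lam S)%:C%C)) N.
Proof.
rewrite summxE /ps.
under eq_bigr => m _ do rewrite mxE powZ powA !mulrA mulr_sumr.
rewrite mulr_sumr.
under [RHS]eq_bigr => S _ do rewrite mulr_sumr mulr_sumr.
rewrite [RHS]exchange_big /=; apply: eq_bigr => m _; apply: eq_bigr => S _.
have -> : (- ('i%C * (t0 * lam S)%:C%C)) = (- ('i%C * t0%:C%C)) * (lam S)%:C%C :> C.
  by rewrite rmorphM; ring.
rewrite exprMn; ring.
Qed.

Lemma entry_cvg a b :
  (\sum_(m < N) (m`!%:R)^-1 *: Mt ^+ m) a b @[N --> \oo] --> Ent a b.
Proof.
under eq_fun do rewrite partial_entry.
rewrite mxE; apply: cvgMl_tmp; apply: cvg_bigsum => S.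
apply: cvgMl_tmp; exact: ps_cvg.
Qed.

Lemma Gprod S : G (t0 * lam S) =
  \prod_(j | D j) (if S j then 'i%C else - 'i%C).
Proof.
rewrite /lam mulr_sumr (big_morph G (@G_add R) (G0 R)).
by apply: eq_bigr => j _; rewrite G_pih.
Qed.

Definition Fj (j : 'I_k) (b : bool) : C :=
  (if v j && b then -1 else 1) * (if u j && b then -1 else 1) *
  (if D j then (if b then 'i%C else - 'i%C) else 1).

Lemma term_prod S : chi S v * chi S u * G (t0 * lam S) = \prod_j Fj j (S j).
Proof. by rewrite Gprod /chi (big_mkcond (fun j => D j)) -!big_split. Qed.

Lemma Fj_norm j : `|\sum_b Fj j b| = 2.
Proof.
rewrite big_bool /Fj /D /= !andbT !andbF.
case: (u j); case: (v j) => /=.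
- by transitivity (`|(2%:R : C)|); [congr (`|_|); ring | exact: normr_nat].
- transitivity (`|- ('i%C *+ 2) : C|); first by congr (`|_|); ring.
  by rewrite normrN normrMn norm_i.
- transitivity (`|- ('i%C *+ 2) : C|); first by congr (`|_|); ring.
  by rewrite normrN normrMn norm_i.
- by transitivity (`|(2%:R : C)|); [congr (`|_|); ring | exact: normr_nat].
Qed.

Lemma amp_one : `|Ent (enum_rank v) (enum_rank u)| = 1.
Proof.
rewrite mxE !enum_rankK.
under eq_bigr => S _ do rewrite term_prod.
rewrite -(bigA_distr_bigA Fj) normrM normr_prod.
rewrite (eq_bigr (fun _ => 2%:R)); last by move=> j _; exact: Fj_norm.
rewrite prodr_const card_ord -natrX ger0_norm ?w2 //.
by rewrite /w invr_ge0 ler0n.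
Qed.

Lemma main_sec : exists (H : rel (qvertex k)) (t0 : R) (E : 'M[R[i]]_#|qvertex k|),
    spanning_subgraph H /\ 0 < t0 /\
    is_mexp (- ('i%C * t0%:C%C) *: adj_matrix R H) E /\
    `|amp E u v| = 1.
Proof.
exists Hr, t0, Ent; split; first by split; [exact: Hr_sym | exact: Hr_sub].
split; first by rewrite /t0 divr_gt0 ?pi_gt0.
split; last exact: amp_one.
rewrite /is_mexp; apply: cvg_mx_entries => a b; exact: entry_cvg.
Qed.

End Hyper.

Theorem mainTheorem5 (R : realType) (k : nat) (hk : (1 <= k)%N)
    (u v : qvertex k) :
  exists (H : rel (qvertex k)) (t0 : R) (E : 'M[R[i]]_#|qvertex k|),
    spanning_subgraph H /\ 0 < t0 /\
    is_mexp (- ('i%C * t0%:C%C) *: adj_matrix R H) E /\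
    `|amp E u v| = 1.
Proof. exact: main_sec. Qed.
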